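(* Let $r_1,r_2,r_3,L>0$ with $r_2>\max(r_1,r_3)$, let $m(y)=r_1\mathbf 1_{y<0}+r_2\mathbf 1_{0\le y<1}+r_3\mathbf 1_{y\ge1}$, let $c_A>2\sqrt{r_1}$, and let $c\in(2\sqrt{r_1},c_A)$, $\eta>0$, $S>0$, $R>1$, $\gamma>0$. Let $\lambda(c)=\frac12(c-\sqrt{c^2-4r_1})$. Let $\varphi_1^R$ be the principal Dirichlet eigenfunction on $(-R,R)$, i.e. the positive solution in $W^{2,1}((-R,R))$ of $-L^{-2}(\varphi_1^R)''-m\varphi_1^R=\lambda_1^R\varphi_1^R$ in $(-R,R)$ with $\varphi_1^R(\pm R)=0$, normalized by $\varphi_1^R(0)=1$ and extended by $0$ outside $(-R,R)$. For $x_0\in\mathbb{R}$ set $$P(t,x)=e^{-\lambda(c)(x-ct-x_0)}-Se^{-(\lambda(c)+\eta)(x-ct-x_0)},\qquad Q(t,x)=\gamma e^{-\lambda(c)(c_A-c)t}e^{-\frac{c_A(x-c_At)}{2}}\varphi_1^R\Big(\frac{x-c_At}{L}\Big).$$ Then there exists $x_0\in\mathbb{R}$ such that for all $t\ge0$ the equation $P(t,x)=Q(t,x)$ admits an isolated solution $X(t)\in\mathbb{R}$ such that: (a) $\partial_xP(t,X(t))<0$; (b) $\partial_xQ(t,X(t))>0$; (c) $c_At-RL<X(t)<c_At$; (d) $\frac{\ln S}{\eta}<\inf_{t\ge0}X(t)-ct-x_0$. Moreover, (e) $X\in\mathcal C^1([0,+\infty),(-RL,+\infty))$, and (f) $X(t)=c_At+O(1)$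 as $t\to+\infty$. *)

(* Defs.v *)
From Stdlib Require Import Reals Lra.
From Coquelicot Require Import Coquelicot.
Open Scope R_scope.

Definition mgrowth (r1 r2 r3 : R) (y : R) : R :=
  if Rlt_dec y 0 then r1 else if Rlt_dec y 1 then r2 else r3.

Definition lam (r1 c : R) : R := (c - sqrt (c ^ 2 - 4 * r1)) / 2.

(* Since m is piecewise constant with jumps only at 0 and 1, a
   W^{2,1}((-R,R)) solution is exactly a C^1 function on (-R,R), continuous up
   to the boundary, twice differentiable away from {0,1}, satisfying the
   equation there. *)
Definition principal_dirichlet_eigenfunction
  (L Rr : R) (m : R -> R) (phi : R -> R) : Prop :=
  exists (lam1 : R) (dphi : R -> R),
    (forall y, (y <= - Rr \/ Rr <= y) -> phi y = 0) /\
    (forall y, continuous phi y) /\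
    (forall y, - Rr < y < Rr -> is_derive phi y (dphi y)) /\
    (forall y, - Rr < y < Rr -> continuous dphi y) /\
    (forall y, - Rr < y < Rr -> y <> 0 -> y <> 1 ->
       exists d2, is_derive dphi y d2 /\
         - / L ^ 2 * d2 - m y * phi y = lam1 * phi y) /\
    (forall y, - Rr < y < Rr -> 0 < phi y) /\
    phi 0 = 1.

Definition Pfun (r1 c S eta x0 : R) (t x : R) : R :=
  exp (- lam r1 c * (x - c * t - x0))
  - S * exp (- (lam r1 c + eta) * (x - c * t - x0)).

Definition Qfun (r1 c cA gamma L : R) (phi : R -> R) (t x : R) : R :=
  gamma * exp (- lam r1 c * (cA - c) * t)
  * exp (- (cA * (x - cA * t)) / 2) * phi ((x - cA * t) / L).

(* Main.v *)
Require Import Defs.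
From Stdlib Require Import Reals Lra Psatz Ranalysis5 ClassicalEpsilon.
From Coquelicot Require Import Coquelicot.
Open Scope R_scope.

Lemma cont_of_deriv (f : R -> R) (x l : R) : is_derive f x l -> continuity_pt f x.
Proof. intro H. apply continuity_pt_filterlim. apply (ex_derive_continuous (K:=R_AbsRing) (V:=R_NormedModule)). exists l; auto. Qed.

Lemma mvt_open f df lo hi y1 y2 :
  (forall y, lo < y < hi -> is_derive f y (df y)) -> lo < y1 -> y1 < y2 -> y2 < hi ->
  exists c, y1 <= c <= y2 /\ f y2 - f y1 = df c * (y2 - y1).
Proof.
  intros Hd H1 H2 H3.
  destruct (MVT_gen f y1 y2 df) as [c [Hc He]].
  - intros x Hx. rewrite Rmin_left in Hx by lra. rewrite Rmax_right in Hx by lra. apply Hd; lra.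
  - intros x Hx. rewrite Rmin_left in Hx by lra. rewrite Rmax_right in Hx by lra.
    apply (cont_of_deriv _ _ (df x)). apply Hd; lra.
  - exists c. rewrite Rmin_left in Hc by lra. rewrite Rmax_right in Hc by lra. auto.
Qed.

Lemma deriv_unique_eq f x l : is_derive f x l -> Derive (fun y => f y) x = l.
Proof. intro H. apply is_derive_unique. auto. Qed.


Lemma cont_eps (f : R -> R) x : continuous f x -> forall eps, 0 < eps ->
  exists d, 0 < d /\ forall y, Rabs (y - x) < d -> Rabs (f y - f x) < eps.
Proof.
  intros Hc eps He.
  apply continuity_pt_filterlim in Hc.
  destruct (Hc eps He) as [d [Hd Hy]].
  exists d; split; auto. intros y Hyd.
  destruct (Req_dec y x) as [->|Hne].
  - rewrite Rminus_diag, Rabs_R0; auto.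
  - apply Hy. split. split; [exact I | auto]. apply Hyd.
Qed.


Lemma eig_key (L Rr r1 lam1 kap : R) (phi dphi : R -> R) :
  0 < L -> 0 < Rr -> 0 <= kap ->
  phi (-Rr) = 0 ->
  (forall y, continuous phi y) ->
  (forall y, -Rr<y<Rr -> is_derive phi y (dphi y)) ->
  (forall y, -Rr<y<Rr -> continuous dphi y) ->
  (forall y, -Rr<y<0 -> exists d2, is_derive dphi y d2 /\ - / L^2 * d2 - r1 * phi y = lam1 * phi y) ->
  (forall y, -Rr<y<Rr -> 0 < phi y) ->
  exists yb m0, -Rr < yb < 0 /\ 0 < m0 /\ forall y, -Rr < y <= yb -> m0 <= dphi y - kap * phi y.
Proof.
  intros HL HR Hk Hbd Hc Hd Hdc Hode Hpos.
  set (K := L^2*(lam1+r1)).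
  set (W := fun y => dphi y ^2 + K * phi y ^2).
  assert (HW: forall y, -Rr<y<0 -> is_derive W y 0).
  { intros y Hy. destruct (Hode y Hy) as [d2 [Hd2 Heq]].
    assert (Hdy : is_derive phi y (dphi y)) by (apply Hd; lra).
    assert (E1: / L^2 * d2 = -(lam1+r1)*phi y) by lra.
    assert (E2: L^2 * (/L^2 * d2) = d2) by (field; lra).
    assert (E3: @eq R d2 (- K * phi y)) by (rewrite <- E2, E1; unfold K; ring).
    unfold W. auto_derive.
    - repeat split; eexists; eauto.
    - rewrite (deriv_unique_eq _ _ _ Hd2), (deriv_unique_eq _ _ _ Hdy), E3. ring. }
  assert (Wc: forall y, -Rr<y<0 -> W y = W (-Rr/2)).
  { intros y Hy. destruct (Rtotal_order y (-Rr/2)) as [Hlt|[Heq|Hgt]].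
    - destruct (mvt_open W (fun _ => 0) (-Rr) 0 y (-Rr/2)) as [c [_ Hc']]; auto; try lra.
    - now rewrite Heq.
    - destruct (mvt_open W (fun _ => 0) (-Rr) 0 (-Rr/2) y) as [c [_ Hc']]; auto; try lra. }
  set (W0 := W (-Rr/2)).
  assert (Hp2 : 0 < phi (-Rr/2)) by (apply Hpos; lra).
  destruct (Rle_lt_dec W0 0) as [Wle|Wgt].
  - exfalso.
    assert (HK : K <= 0).
    { destruct (Rle_lt_dec K 0) as [|HK]; auto. exfalso. unfold W0, W in Wle. pose proof (pow2_ge_0 (dphi (-Rr/2))). assert (0 < K * phi (-Rr/2)^2) by (apply Rmult_lt_0_compat; [lra| apply pow_lt; lra]). lra. }
    set (k := sqrt (-K)).
    assert (Hk0 : 0 <= k) by apply sqrt_pos.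
    assert (Hkk : k * k = - K) by (apply sqrt_sqrt; lra).
    assert (Hdle : forall y, -Rr<y<0 -> dphi y <= k * phi y).
    { intros y Hy. pose proof (Wc y Hy) as E. fold W0 in E. unfold W in E.
      assert (0 < phi y) by (apply Hpos; lra).
      destruct (Rle_lt_dec (dphi y) (k*phi y)) as [|Hgt]; auto. exfalso.
      assert (0 <= k*phi y) by (apply Rmult_le_pos; lra).
      assert (Hp: 0 < (dphi y - k*phi y)*(dphi y + k*phi y)) by (apply Rmult_lt_0_compat; lra).
      assert (Hx : (dphi y - k*phi y)*(dphi y + k*phi y) = dphi y ^2 + K * (phi y)^2).
      { replace K with (- (k*k)) by lra. ring. }
      lra. }
    set (g := fun y => phi y * exp (-k*y)).
    set (dg := fun y => (dphi y - k * phi y) * exp (-k*y)).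
    assert (Hg : forall y, -Rr<y<0 -> is_derive g y (dg y)).
    { intros y Hy. assert (Hdy : is_derive phi y (dphi y)) by (apply Hd; lra).
      unfold g, dg. auto_derive.
      - repeat split; eexists; eauto.
      - rewrite (deriv_unique_eq _ _ _ Hdy). ring. }
    set (g0 := g (-Rr/2)).
    assert (Hg0 : 0 < g0) by (unfold g0, g; apply Rmult_lt_0_compat; auto; apply exp_pos).
    assert (Hlow : forall y, -Rr < y < -Rr/2 -> g0 * exp (-k*Rr) <= phi y).
    { intros y Hy.
      destruct (mvt_open g dg (-Rr) 0 y (-Rr/2)) as [c [Hc1 Hc2]]; auto; try lra.
      assert (dg c <= 0).
      { unfold dg. assert (dphi c - k*phi c <= 0) by (apply Rle_minus, Hdle; lra).
        pose proof (exp_pos (-k*c)). nra. }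
      assert (g0 <= g y) by (unfold g0; nra).
      assert (Hpy : phi y = g y * exp (k*y)).
      { unfold g. rewrite Rmult_assoc, <- exp_plus. replace (-k*y+k*y) with 0 by ring. rewrite exp_0; ring. }
      rewrite Hpy. apply Rmult_le_compat; try lra.
      - apply Rlt_le, exp_pos.
      - apply exp_le_3 || (destruct (Rle_lt_or_eq_dec (-k*Rr) (k*y)) as [Hl|He]; [nra| apply Rlt_le, exp_increasing; auto | rewrite He; lra]). }
    assert (He : 0 < g0 * exp (-k*Rr)) by (apply Rmult_lt_0_compat; auto; apply exp_pos).
    destruct (cont_eps phi (-Rr) (Hc _) _ He) as [d [Hd0 Hdd]].
    set (y := -Rr + Rmin d Rr / 4).
    assert (Hm : 0 < Rmin d Rr) by (apply Rmin_pos; lra).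
    assert (Hm2 : Rmin d Rr <= Rr) by apply Rmin_r.
    assert (Hm3 : Rmin d Rr <= d) by apply Rmin_l.
    assert (Hy1 : Rabs (y - -Rr) < d) by (unfold y; rewrite Rabs_right; lra).
    pose proof (Hdd y Hy1) as Hc'. rewrite Hbd, Rminus_0_r in Hc'.
    pose proof (Hlow y ltac:(unfold y; lra)) as Hl.
    rewrite Rabs_right in Hc' by lra. lra.
  - set (s0 := sqrt W0).
    assert (Hs0 : 0 < s0) by (apply sqrt_lt_R0; lra).
    assert (Hss : s0 * s0 = W0) by (apply sqrt_sqrt; lra).
    assert (HaK : 0 <= Rabs K) by apply Rabs_pos.
    set (e2 := W0/(4*(Rabs K+1))). set (e3 := s0/(4*(kap+1))).
    assert (He2 : 0 < e2) by (unfold e2; apply Rdiv_lt_0_compat; lra).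
    assert (He3 : 0 < e3) by (unfold e3; apply Rdiv_lt_0_compat; lra).
    set (eps1 := Rmin 1 (Rmin e2 e3)).
    assert (He1 : 0 < eps1) by (unfold eps1; repeat apply Rmin_pos; lra).
    assert (Hm1 : eps1 <= 1) by apply Rmin_l.
    assert (Hm2 : eps1 <= e2) by (unfold eps1; eapply Rle_trans; [apply Rmin_r| apply Rmin_l]).
    assert (Hm3 : eps1 <= e3) by (unfold eps1; eapply Rle_trans; [apply Rmin_r| apply Rmin_r]).
    destruct (cont_eps phi (-Rr) (Hc _) _ He1) as [d [Hd0 Hdd]].
    assert (Hm : 0 < Rmin d Rr) by (apply Rmin_pos; lra).
    assert (Hmr : Rmin d Rr <= Rr) by apply Rmin_r.
    assert (Hmd : Rmin d Rr <= d) by apply Rmin_l.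
    set (yb := -Rr + Rmin d Rr / 2).
    assert (Hsmall : forall y, -Rr < y <= yb -> phi y < eps1).
    { intros y Hy. assert (Hy1 : Rabs (y - -Rr) < d) by (rewrite Rabs_right; unfold yb in Hy; lra).
      pose proof (Hdd y Hy1) as Hc'. rewrite Hbd, Rminus_0_r in Hc'.
      pose proof (Rle_abs (phi y)). lra. }
    assert (Hbig : forall y, -Rr < y <= yb -> W0/4 < dphi y ^ 2).
    { intros y Hy. assert (Hyn : -Rr < y < 0) by (unfold yb in Hy; lra).
      pose proof (Wc y Hyn) as E. fold W0 in E. unfold W in E.
      assert (Hp : 0 < phi y) by (apply Hpos; lra).
      pose proof (Hsmall y Hy) as Hs.
      assert (Hpp : phi y ^ 2 <= phi y) by nra.
      assert (HKa : K * phi y ^2 <= Rabs K * phi y ^2).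
      { apply Rmult_le_compat_r; [apply pow2_ge_0| apply Rle_abs]. }
      assert (HKb : Rabs K * phi y ^2 <= Rabs K * e2).
      { apply Rmult_le_compat_l; lra. }
      assert (HKc : Rabs K * e2 = W0/4 - e2) by (unfold e2; field; lra).
      lra. }
    assert (Hpd : forall y, -Rr < y <= yb -> 0 < dphi y).
    { intros y1 Hy1. destruct (Rle_lt_dec (dphi y1) 0) as [Hneg|]; auto. exfalso.
      assert (Hpy1 : 0 < phi y1) by (apply Hpos; unfold yb in Hy1; lra).
      destruct (cont_eps phi (-Rr) (Hc _) _ Hpy1) as [d' [Hd'0 Hdd']].
      assert (Hm' : 0 < Rmin d' (y1 + Rr)) by (apply Rmin_pos; lra).
      assert (Hmr' : Rmin d' (y1+Rr) <= y1 + Rr) by apply Rmin_r.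
      assert (Hmd' : Rmin d' (y1+Rr) <= d') by apply Rmin_l.
      set (y0 := -Rr + Rmin d' (y1 + Rr) / 2).
      assert (Hy0 : Rabs (y0 - -Rr) < d') by (unfold y0; rewrite Rabs_right; lra).
      pose proof (Hdd' y0 Hy0) as Hc'. rewrite Hbd, Rminus_0_r in Hc'.
      pose proof (Rle_abs (phi y0)).
      destruct (mvt_open phi dphi (-Rr) Rr y0 y1) as [c [Hc1 Hc2]]; auto;
        try (unfold y0; lra); try (unfold yb in Hy1; lra).
      assert (Hdcp : 0 < dphi c).
      { destruct (Rle_lt_dec (dphi c) 0) as [Hn|]; auto.
        assert (dphi c * (y1 - y0) <= 0) by (assert (0 < y1 - y0) by (unfold y0; lra); nra). lra. }
      assert (Hy1n : dphi y1 < 0).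
      { destruct (Req_dec (dphi y1) 0) as [Hz|]; [|lra].
        pose proof (Hbig y1 Hy1) as Hb. rewrite Hz in Hb. simpl in Hb. lra. }
      assert (Hcy : c < y1) by (destruct (Req_dec c y1) as [->|]; lra).
      destruct (IVT_interv (fun x => - dphi x) c y1) as [z [Hz1 Hz2]]; auto; try lra.
      + intros a Ha. apply (continuity_pt_opp dphi). apply continuity_pt_filterlim.
        apply Hdc. unfold y0, yb in *; lra.
      + pose proof (Hbig z ltac:(unfold y0, yb in *; lra)) as Hb.
        assert (Hz0 : dphi z = 0) by lra. rewrite Hz0 in Hb. simpl in Hb. lra. }
    exists yb, (s0/4). split; [unfold yb; lra|]. split; [lra|].
    intros y Hy.
    pose proof (Hpd y Hy) as Hp1. pose proof (Hbig y Hy) as Hb.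
    pose proof (Hsmall y Hy) as Hs.
    assert (Hps : 0 < phi y) by (apply Hpos; unfold yb in Hy; lra).
    assert (Hd2 : s0/2 < dphi y).
    { destruct (Rle_lt_dec (dphi y) (s0/2)) as [Hl|]; auto. exfalso.
      assert (dphi y ^2 <= (s0/2)^2) by (apply pow_incr; lra).
      assert ((s0/2)^2 = W0/4) by (rewrite <- Hss; field). lra. }
    assert (Hk2 : kap * phi y <= kap * e3) by (apply Rmult_le_compat_l; lra).
    assert (Hk3 : kap * e3 <= s0/4).
    { unfold e3. assert (kap * (s0/(4*(kap+1))) = s0/4 - s0/(4*(kap+1))) by (field; lra).
      assert (0 < s0/(4*(kap+1))) by (apply Rdiv_lt_0_compat; lra). lra. }
    lra.
Qed.


Lemma eps_cont (f : R -> R) x :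
  (forall eps, 0 < eps -> exists d, 0 < d /\ forall y, Rabs (y - x) < d -> Rabs (f y - f x) < eps) ->
  continuous f x.
Proof.
  intro He. apply continuity_pt_filterlim.
  intros eps Heps. destruct (He eps Heps) as [d [Hd Hy]].
  exists d; split; auto. intros y [_ Hyd]. apply Hy. apply Hyd.
Qed.

Lemma mvt_closed f df a b y1 y2 :
  (forall y, a <= y <= b -> is_derive f y (df y)) -> a <= y1 -> y1 < y2 -> y2 <= b ->
  exists c, y1 <= c <= y2 /\ f y2 - f y1 = df c * (y2 - y1).
Proof.
  intros Hd H1 H2 H3.
  destruct (MVT_gen f y1 y2 df) as [c [Hc He]].
  - intros x Hx. rewrite Rmin_left in Hx by lra. rewrite Rmax_right in Hx by lra. apply Hd; lra.
  - intros x Hx. rewrite Rmin_left in Hx by lra. rewrite Rmax_right in Hx by lra.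
    apply (cont_of_deriv _ _ (df x)). apply Hd; lra.
  - exists c. rewrite Rmin_left in Hc by lra. rewrite Rmax_right in Hc by lra. auto.
Qed.

Lemma inv_fun (H dH : R -> R) a b :
  a < b ->
  (forall z, a <= z <= b -> is_derive H z (dH z)) ->
  (forall z, a <= z <= b -> continuous dH z) ->
  (forall z, a <= z <= b -> dH z < 0) ->
  exists g : R -> R, forall v, H b < v < H a ->
     a < g v < b /\ H (g v) = v /\ continuous g v /\ is_derive g v (/ dH (g v)).
Proof.
  intros Hab Hd Hdc Hneg.
  assert (Hdec : forall x y, a <= x -> x < y -> y <= b -> H y < H x).
  { intros x y Hx Hxy Hy. destruct (mvt_closed H dH a b x y) as [c [Hc1 Hc2]]; auto.
    assert (dH c < 0) by (apply Hneg; lra). nra. }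
  assert (Hle : forall x y, a <= x -> x <= y -> y <= b -> H y <= H x).
  { intros x y Hx Hxy Hy. destruct (Req_dec x y) as [->|]; [lra|]. apply Rlt_le, Hdec; lra. }
  assert (Hex : forall v, H b < v < H a -> exists z, a < z < b /\ H z = v).
  { intros v Hv. destruct (IVT_interv (fun z => v - H z) a b) as [z [Hz1 Hz2]]; auto; try lra.
    - intros x Hx. apply continuity_pt_minus; [apply continuity_pt_const; intros ? ?; auto|].
      apply (cont_of_deriv _ _ (dH x)). apply Hd; lra.
    - exists z. split; [|lra].
      split; [destruct (Req_dec z a) as [->|]| destruct (Req_dec z b) as [->|]]; lra. }
  set (g := fun v => epsilon (inhabits 0) (fun z => a < z < b /\ H z = v)).
  assert (Hg : forall v, H b < v < H a -> a < g v < b /\ H (g v) = v).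
  { intros v Hv. unfold g. apply (epsilon_spec (inhabits 0) (fun z => a < z < b /\ H z = v)).
    apply Hex; auto. }
  assert (Hgc : forall v, H b < v < H a -> forall eps, 0 < eps ->
             exists d, 0 < d /\ forall v', Rabs (v' - v) < d -> Rabs (g v' - g v) < eps).
  { intros v Hv eps Heps. destruct (Hg v Hv) as [Hz1 Hz2]. set (z := g v) in *.
    set (e' := Rmin (eps/2) (Rmin (z - a) (b - z))).
    assert (He' : 0 < e') by (unfold e'; repeat apply Rmin_pos; lra).
    assert (He1 : e' <= eps/2) by apply Rmin_l.
    assert (He2 : e' <= z - a) by (unfold e'; eapply Rle_trans; [apply Rmin_r| apply Rmin_l]).
    assert (He3 : e' <= b - z) by (unfold e'; eapply Rle_trans; [apply Rmin_r| apply Rmin_r]).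
    assert (Hz1v : v < H (z - e')) by (rewrite <- Hz2; apply Hdec; lra).
    assert (Hz2v : H (z + e') < v) by (rewrite <- Hz2; apply Hdec; lra).
    exists (Rmin (H (z - e') - v) (v - H (z + e'))). split.
    - apply Rmin_pos; lra.
    - intros v' Hv'.
      assert (Hm1 := Rmin_l (H (z - e') - v) (v - H (z + e'))).
      assert (Hm2 := Rmin_r (H (z - e') - v) (v - H (z + e'))).
      apply Rabs_def2 in Hv'. destruct Hv' as [Hv1 Hv2].
      assert (HA : H a >= H (z - e')) by (apply Rle_ge, Hle; lra).
      assert (HB : H (z + e') >= H b) by (apply Rle_ge, Hle; lra).
      destruct (Hg v' ltac:(lra)) as [Hw1 Hw2].
      assert (z - e' < g v').
      { destruct (Rle_lt_dec (g v') (z - e')) as [Hl|]; auto.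
        assert (H (z - e') <= H (g v')) by (apply Hle; lra). lra. }
      assert (g v' < z + e').
      { destruct (Rle_lt_dec (z + e') (g v')) as [Hl|]; auto.
        assert (H (g v') <= H (z + e')) by (apply Hle; lra). lra. }
      apply Rabs_def1; lra. }
  exists g. intros v Hv. destruct (Hg v Hv) as [Hz1 Hz2]. split; auto. split; auto. split.
  { apply eps_cont. apply Hgc; auto. }
  apply is_derive_Reals.
  set (z := g v) in *. set (D := dH z).
  assert (HD : D < 0) by (apply Hneg; lra).
  intros eps Heps.
  assert (Hep : 0 < Rmin (-D/2) (eps*D^2/4)).
  { apply Rmin_pos; [lra|]. assert (0 < D^2) by (apply pow_lt_1_compat || nra). nra. }
  destruct (cont_eps dH z (Hdc z ltac:(lra)) _ Hep) as [d1 [Hd1 Hdd1]].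
  destruct (Hgc v Hv d1 Hd1) as [d2 [Hd2 Hdd2]].
  assert (Hdel : 0 < Rmin d2 (Rmin (v - H b) (H a - v))) by (repeat apply Rmin_pos; lra).
  exists (mkposreal _ Hdel). intros h Hh0 Hh. simpl in Hh.
  assert (Hm1 := Rmin_l d2 (Rmin (v - H b) (H a - v))).
  assert (Hm2 := Rmin_r d2 (Rmin (v - H b) (H a - v))).
  assert (Hm3 := Rmin_l (v - H b) (H a - v)).
  assert (Hm4 := Rmin_r (v - H b) (H a - v)).
  apply Rabs_def2 in Hh as Hh'. destruct Hh' as [Hh1 Hh2].
  destruct (Hg (v + h) ltac:(lra)) as [Hw1 Hw2].
  set (w := g (v + h)) in *.
  assert (Hwz : Rabs (w - z) < d1) by (apply Hdd2; replace (v + h - v) with h by ring; lra).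
  assert (Hex2 : exists c, Rabs (c - z) < d1 /\ a <= c <= b /\ h = dH c * (w - z)).
  { destruct (Rtotal_order w z) as [Hl|[He|Hgt]].
    - destruct (mvt_closed H dH a b w z) as [c [Hc1 Hc2]]; auto; try lra.
      exists c. split; [apply Rabs_def2 in Hwz; apply Rabs_def1; lra|]. split; [lra|].
      replace h with ((v + h) - v) by ring. rewrite <- Hw2, <- Hz2. lra.
    - exfalso. apply Hh0. assert (H w = H z) by (rewrite He; auto). lra.
    - destruct (mvt_closed H dH a b z w) as [c [Hc1 Hc2]]; auto; try lra.
      exists c. split; [apply Rabs_def2 in Hwz; apply Rabs_def1; lra|]. split; [lra|].
      replace h with ((v + h) - v) by ring. rewrite <- Hw2, <- Hz2. lra. }
  destruct Hex2 as [c [Hc1 [Hc2 Hc3]]].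
  pose proof (Hdd1 c Hc1) as Hq. fold D in Hq.
  assert (Hq1 := Rmin_l (-D/2) (eps*D^2/4)).
  assert (Hq2 := Rmin_r (-D/2) (eps*D^2/4)).
  apply Rabs_def2 in Hq. destruct Hq as [Hq3 Hq4].
  set (q := dH c) in *.
  assert (Hq : q < D/2) by lra.
  assert (Hwz0 : w - z <> 0) by (intro E; rewrite E, Rmult_0_r in Hc3; auto).
  assert (Hquot : (w - z) / h = / q).
  { rewrite Hc3. field. split; auto. lra. }
  replace (g (v + h)) with w by reflexivity. change (g v) with z. rewrite Hquot.
  assert (HqD : D^2/2 < q * D) by nra.
  set (X := / q - / D).
  assert (HX : X * (q * D) = D - q) by (unfold X; field; lra).
  assert (HXa : Rabs X * (q * D) < eps / 2 * (q * D)).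
  { rewrite <- (Rabs_right (q * D)) at 1 by nra. rewrite <- Rabs_mult, HX.
    assert (Rabs (D - q) < eps * D^2/4) by (apply Rabs_def1; lra). nra. }
  assert (Rabs X < eps/2) by (apply Rmult_lt_reg_r with (q * D); nra).
  unfold X in *. lra.
Qed.


Lemma exp_gt_of x y : 0 < y -> ln y < x -> y < exp x.
Proof. intros Hy Hl. rewrite <- (exp_ln y) by auto. apply exp_increasing; auto. Qed.

Lemma mul_lt_of_div x y k : 0 < k -> x / k < y -> x < k * y.
Proof. intros Hk H. replace x with (k * (x / k)) by (field; lra). apply Rmult_lt_compat_l; auto. Qed.

Lemma div_bounds z L Rr : 0 < L -> -(Rr*L) < z < Rr*L -> -Rr < z/L < Rr.
Proof.
  intros HL [H1 H2]. split; apply (Rmult_lt_reg_r L); auto; unfold Rdiv;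
  rewrite Rmult_assoc, Rinv_l, Rmult_1_r; lra.
Qed.

Lemma isolated (F : R -> R) x d : is_derive F x d -> d <> 0 -> F x = 0 ->
  exists delta, 0 < delta /\ forall y, 0 < Rabs (y - x) < delta -> F y <> 0.
Proof.
  intros Hd Hd0 Hx. apply is_derive_Reals in Hd.
  assert (Ha : 0 < Rabs d) by (apply Rabs_pos_lt; auto).
  destruct (Hd (Rabs d) Ha) as [del Hdel].
  exists del. split; [apply cond_pos|]. intros y [Hy1 Hy2] HFy.
  assert (Hh : y - x <> 0) by (intro E; rewrite E, Rabs_R0 in Hy1; lra).
  pose proof (Hdel (y - x) Hh Hy2) as Hq.
  replace (x + (y - x)) with y in Hq by ring. rewrite HFy, Hx in Hq.
  replace ((0 - 0) / (y - x) - d) with (- d) in Hq by (field; auto).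
  rewrite Rabs_Ropp in Hq. lra.
Qed.

Lemma deriv_quot_right (f : R -> R) l : is_derive f 0 l ->
  filterlim (fun h => (f h - f 0) / h) (at_right 0) (locally l).
Proof.
  intro Hd. apply is_derive_Reals in Hd.
  apply filterlim_locally. intros eps.
  destruct (Hd eps (cond_pos eps)) as [d Hdd].
  exists d. intros y Hy Hy0.
  change (Rabs (y - 0) < d) in Hy.
  change (Rabs ((f y - f 0) / y - l) < eps).
  rewrite Rminus_0_r in Hy.
  pose proof (Hdd y ltac:(lra) Hy) as Hq. rewrite Rplus_0_l in Hq. auto.
Qed.

Lemma PQ_eq (l eta S x0 gamma cA c L : R) (phi : R -> R) (t z pz : R) :
  pz = gamma * exp (- (cA * z) / 2) * phi (z / L) ->
  exp (eta*(z - x0)) - pz * exp ((l+eta)*(z - x0)) = S * exp (-eta*((cA-c)*t)) ->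
  exp (- l * (cA*t + z - c * t - x0)) - S * exp (- (l + eta) * (cA*t + z - c * t - x0))
  = gamma * exp (- l * (cA - c) * t) * exp (- (cA * (cA*t + z - cA * t)) / 2) * phi ((cA*t + z - cA * t) / L).
Proof.
  intros Hpz HH.
  replace (cA*t + z - cA*t) with z by ring.
  replace (gamma * exp (- l * (cA - c) * t) * exp (- (cA * z) / 2) * phi (z / L)) with (exp (- l * (cA - c) * t) * pz) by (rewrite Hpz; ring).
  set (u := z - x0) in *. set (s := (cA - c) * t) in *.
  set (A1 := exp (- l * s)). set (B1 := exp (- (l+eta) * u)).
  assert (E1 : exp (- l * (cA*t + z - c * t - x0)) = A1 * B1 * exp (eta * u)).
  { unfold A1, B1. rewrite <- !exp_plus. f_equal. unfold u, s. ring. }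
  assert (E2 : exp (- (l + eta) * (cA*t + z - c * t - x0)) = A1 * B1 * exp (-eta * s)).
  { unfold A1, B1. rewrite <- !exp_plus. f_equal. unfold u, s. ring. }
  assert (E3 : exp (- l * (cA - c) * t) = A1).
  { unfold A1, s. f_equal. ring. }
  assert (E4 : B1 * exp ((l+eta)*u) = 1).
  { unfold B1. rewrite <- exp_plus. replace (- (l + eta) * u + (l + eta) * u) with 0 by ring. apply exp_0. }
  rewrite E1, E2, E3.
  assert (pz = B1 * (exp (eta*u) - S * exp (-eta*s))).
  { rewrite <- HH. replace (B1 * (exp (eta*u) - (exp (eta*u) - pz * exp ((l+eta)*u))))
      with (pz * (B1 * exp ((l+eta)*u))) by ring. rewrite E4; ring. }
  rewrite H. ring.
Qed.

Lemma dP_neg l eta S W w : 0 < l -> 0 < eta -> 0 < S -> S*(l+eta)/l < exp (eta*W) -> W < w ->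
  - l * exp (- l * w) + S * (l + eta) * exp (- (l + eta) * w) < 0.
Proof.
  intros Hl He HS HW Hw.
  assert (E : exp (- (l + eta) * w) = exp (- l * w) * / exp (eta * w)).
  { rewrite <- exp_Ropp, <- exp_plus. f_equal. ring. }
  rewrite E.
  assert (Hw2 : exp (eta * W) < exp (eta * w)) by (apply exp_increasing; nra).
  assert (Hq : S * (l + eta) < l * exp (eta * w)).
  { apply (Rmult_lt_reg_r (/ l)). apply Rinv_0_lt_compat; auto.
    replace (l * exp (eta * w) * / l) with (exp (eta * w)) by (field; lra). unfold Rdiv in HW. lra. }
  pose proof (exp_pos (-l*w)) as P1. pose proof (exp_pos (eta*w)) as P2.
  assert (S * (l + eta) * / exp (eta * w) < l).
  { apply (Rmult_lt_reg_r (exp (eta*w))); auto. rewrite Rmult_assoc, Rinv_l; lra. }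
  nra.
Qed.


Theorem lemma3p4 (r1 r2 r3 L cA c eta S Rr gamma : R) (phi : R -> R)
  (hr1 : 0 < r1) (hr2 : 0 < r2) (hr3 : 0 < r3) (hL : 0 < L)
  (hr2max : Rmax r1 r3 < r2)
  (hcA : 2 * sqrt r1 < cA)
  (hc : 2 * sqrt r1 < c < cA)
  (heta : 0 < eta) (hS : 0 < S) (hR : 1 < Rr) (hgamma : 0 < gamma)
  (hphi : principal_dirichlet_eigenfunction L Rr (mgrowth r1 r2 r3) phi) :
  exists (x0 : R) (X : R -> R),
    (forall t, 0 <= t ->
       Pfun r1 c S eta x0 t (X t) = Qfun r1 c cA gamma L phi t (X t) /\
       (exists delta, 0 < delta /\ forall x, 0 < Rabs (x - X t) < delta ->
          Pfun r1 c S eta x0 t x <> Qfun r1 c cA gamma L phi t x) /\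
       (exists dP, is_derive (fun x => Pfun r1 c S eta x0 t x) (X t) dP /\ dP < 0) /\
       (exists dQ, is_derive (fun x => Qfun r1 c cA gamma L phi t x) (X t) dQ /\ 0 < dQ) /\
       cA * t - Rr * L < X t < cA * t) /\
    Rbar_lt (Finite (ln S / eta))
      (Glb_Rbar (fun y => exists t, 0 <= t /\ y = X t - c * t - x0)) /\
    (forall t, 0 <= t -> - (Rr * L) < X t) /\
    (exists X' : R -> R,
       (forall t, 0 < t -> is_derive X t (X' t)) /\
       filterlim (fun h => (X h - X 0) / h) (at_right 0) (locally (X' 0)) /\
       (forall t, 0 < t -> continuous X' t) /\
       filterlim X' (at_right 0) (locally (X' 0))) /\
    (exists M T, forall t, T <= t -> Rabs (X t - cA * t) <= M).
Proof.
  destruct hphi as [lam1 [dphi [Hbd [Hc [Hd [Hdc [Hode [Hpos Hphi0]]]]]]]].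
  assert (Hsr : 0 <= sqrt r1) by apply sqrt_pos.
  assert (Hc0 : 0 < c) by lra.
  assert (HcA0 : 0 < cA) by lra.
  set (l := lam r1 c).
  assert (Hl : 0 < l).
  { unfold l, lam. assert (sqrt (c^2 - 4*r1) < c).
    { destruct (Rlt_or_le (c^2-4*r1) 0).
      - rewrite sqrt_neg_0; lra.
      - rewrite <- (sqrt_pow2 c) at 2 by lra. apply sqrt_lt_1_alt. lra. }
    lra. }
  set (kap := cA*L/2).
  assert (Hkap : 0 <= kap) by (unfold kap; nra).
  assert (HRr : 0 < Rr) by lra.
  destruct (eig_key L Rr r1 lam1 kap phi dphi hL HRr Hkap) as [yb [m0 [Hyb [Hm0 Hkey]]]].
  { apply Hbd. left; lra. }
  { auto. }
  { auto. }
  { auto. }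
  { intros y Hy. destruct (Hode y ltac:(lra) ltac:(lra) ltac:(lra)) as [d2 [H1 H2]].
    exists d2; split; auto. unfold mgrowth in H2. destruct (Rlt_dec y 0); [auto|lra]. }
  { auto. }
  set (psi := fun z => gamma * exp (- (cA * z) / 2) * phi (z / L)).
  set (dpsi := fun z => gamma * exp (- (cA * z) / 2) * (dphi (z / L) / L - cA / 2 * phi (z / L))).
  assert (Hpsid : forall z, -(Rr*L) < z < Rr*L -> is_derive psi z (dpsi z)).
  { intros z Hz. pose proof (div_bounds z L Rr hL Hz) as Hzl.
    pose proof (Hd (z/L) Hzl) as Hdz. unfold psi, dpsi. auto_derive.
    - repeat split; eexists; eauto.
    - replace (Derive (fun x => phi x) (z * /L)) with (dphi (z/L))
        by (symmetry; apply is_derive_unique; auto).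
      unfold Rdiv. field. lra. }
  assert (Hpsic : forall z, continuous psi z).
  { intro z. unfold psi. apply (continuous_mult (fun z => gamma * exp(-(cA*z)/2))).
    - apply (ex_derive_continuous (K:=R_AbsRing) (V:=R_NormedModule)); auto_derive; auto.
    - apply (continuous_comp (fun z => z / L) phi).
      + apply (ex_derive_continuous (K:=R_AbsRing) (V:=R_NormedModule)); auto_derive; auto.
      + apply Hc. }
  assert (Hdpsic : forall z, -(Rr*L) < z < Rr*L -> continuous dpsi z).
  { intros z Hz. pose proof (div_bounds z L Rr hL Hz) as Hzl. unfold dpsi.
    apply (continuous_mult (fun z => gamma * exp(-(cA*z)/2))).
    - apply (ex_derive_continuous (K:=R_AbsRing) (V:=R_NormedModule)); auto_derive; auto.
    - apply (continuous_minus (fun z => dphi (z / L) / L)).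
      + apply (continuous_mult (fun z => dphi (z / L)) (fun _ => / L)).
        * apply (continuous_comp (fun z => z / L) dphi).
          -- apply (ex_derive_continuous (K:=R_AbsRing) (V:=R_NormedModule)); auto_derive; auto.
          -- apply Hdc; auto.
        * apply continuous_const.
      + apply (continuous_mult (fun _ => cA / 2) (fun z => phi (z / L))).
        * apply continuous_const.
        * apply (continuous_comp (fun z => z / L) phi).
          -- apply (ex_derive_continuous (K:=R_AbsRing) (V:=R_NormedModule)); auto_derive; auto.
          -- apply Hc. }
  set (b := yb * L).
  assert (Hb : -(Rr*L) < b < 0) by (unfold b; split; nra).
  assert (HRL : 0 < Rr * L) by nra.
  set (m1 := gamma * m0 / L).
  assert (Hm1 : 0 < m1) by (unfold m1; apply Rdiv_lt_0_compat; nra).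
  assert (Hdpsi_lb : forall z, -(Rr*L) < z <= b -> m1 <= dpsi z).
  { intros z Hz. assert (Hz' : -(Rr*L) < z < Rr*L) by lra.
    pose proof (div_bounds z L Rr hL Hz') as Hzl.
    assert (Hzb : z / L <= yb).
    { apply (Rmult_le_reg_r L); auto. unfold Rdiv. rewrite Rmult_assoc, Rinv_l, Rmult_1_r by lra.
      unfold b in Hz; lra. }
    pose proof (Hkey (z/L) ltac:(lra)) as Hk.
    assert (E : dpsi z = gamma * exp(-(cA*z)/2) * ((dphi (z/L) - kap*phi(z/L)) / L))
      by (unfold dpsi, kap; field; lra).
    assert (He : 1 <= exp (-(cA*z)/2)).
    { rewrite <- exp_0. destruct (Req_dec z 0) as [->|]; [lra|].
      apply Rlt_le, exp_increasing. assert (0 < cA * (-z)) by nra. lra. }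
    assert (Hq : m0 / L <= (dphi (z/L) - kap*phi(z/L)) / L).
    { unfold Rdiv. apply Rmult_le_compat_r; [apply Rlt_le, Rinv_0_lt_compat; auto| auto]. }
    assert (Hq0 : 0 < m0 / L) by (apply Rdiv_lt_0_compat; auto).
    rewrite E. unfold m1. replace (gamma * m0 / L) with (gamma * 1 * (m0 / L)) by (field; lra).
    apply Rmult_le_compat; try lra. apply Rmult_le_compat; lra. }
  assert (Hpsi_pos : forall z, -(Rr*L) < z < Rr*L -> 0 < psi z).
  { intros z Hz. pose proof (div_bounds z L Rr hL Hz) as Hzl. unfold psi.
    apply Rmult_lt_0_compat; [apply Rmult_lt_0_compat; [lra| apply exp_pos]| apply Hpos; auto]. }
  set (pb := psi b).
  assert (Hpb : 0 < pb) by (apply Hpsi_pos; lra).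
  set (W := 1 + Rabs (ln (2*S)/eta) + Rabs (ln (S*(l+eta)/l)/eta) + Rabs (ln (eta/m1)/l)
            + Rabs (ln pb / l) + Rabs (b + Rr*L)).
  pose proof (Rabs_pos (ln (2*S)/eta)). pose proof (Rabs_pos (ln (S*(l+eta)/l)/eta)).
  pose proof (Rabs_pos (ln (eta/m1)/l)). pose proof (Rabs_pos (ln pb / l)).
  pose proof (Rabs_pos (b + Rr*L)).
  assert (HW0 : 0 < W) by (unfold W; lra).
  assert (HW1 : 2*S < exp (eta*W)).
  { apply exp_gt_of; [lra|]. apply mul_lt_of_div; auto. pose proof (Rle_abs (ln (2*S)/eta)). unfold W; lra. }
  assert (HW2 : S*(l+eta)/l < exp (eta*W)).
  { apply exp_gt_of; [apply Rdiv_lt_0_compat; nra|]. apply mul_lt_of_div; auto.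
    pose proof (Rle_abs (ln (S*(l+eta)/l)/eta)). unfold W; lra. }
  assert (HW3 : eta/m1 < exp (l*W)).
  { apply exp_gt_of; [apply Rdiv_lt_0_compat; nra|]. apply mul_lt_of_div; auto.
    pose proof (Rle_abs (ln (eta/m1)/l)). unfold W; lra. }
  assert (HW4 : exp (- l * (b + Rr*L + W)) < pb).
  { rewrite <- (exp_ln pb) by auto. apply exp_increasing.
    assert (- (ln pb / l) < b + Rr*L + W).
    { pose proof (Rle_abs (- (ln pb / l))). rewrite Rabs_Ropp in H4.
      pose proof (Rle_abs (-(b + Rr*L))). rewrite Rabs_Ropp in H5. unfold W; lra. }
    assert (Hx : ln pb = l * (ln pb / l)) by (field; lra). rewrite Hx.
    assert (l * (- (ln pb / l)) < l * (b + Rr*L + W)) by (apply Rmult_lt_compat_l; auto). lra. }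
  set (x0 := -(Rr*L) - W).
  set (HH := fun z => exp (eta*(z - x0)) - psi z * exp ((l+eta)*(z - x0))).
  set (dHH := fun z => eta*exp(eta*(z - x0)) - (dpsi z + (l+eta)*psi z) * exp((l+eta)*(z - x0))).
  assert (Hpsim : psi (-(Rr*L)) = 0).
  { unfold psi. replace (-(Rr*L)/L) with (-Rr) by (field; lra). rewrite Hbd by (left; lra). ring. }
  set (E := exp ((l+eta)*(b - x0))).
  assert (HE : 0 < E) by apply exp_pos.
  destruct (cont_eps psi (-(Rr*L)) (Hpsic _) (S/E) ltac:(apply Rdiv_lt_0_compat; auto)) as [d [Hd0 Hdd]].
  assert (Hmd : Rmin d (b + Rr*L) <= d) by apply Rmin_l.
  assert (Hmb : Rmin d (b + Rr*L) <= b + Rr*L) by apply Rmin_r.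
  assert (Hm0' : 0 < Rmin d (b + Rr*L)) by (apply Rmin_pos; lra).
  set (a := -(Rr*L) + Rmin d (b + Rr*L) / 2).
  assert (Ha : -(Rr*L) < a < b) by (unfold a; lra).
  assert (Hpa : psi a * E < S).
  { assert (Hal : Rabs (a - -(Rr*L)) < d) by (unfold a; rewrite Rabs_right; lra).
    pose proof (Hdd a Hal) as Hq. rewrite Hpsim, Rminus_0_r in Hq.
    pose proof (Rle_abs (psi a)).
    replace S with (S / E * E) by (field; lra). apply Rmult_lt_compat_r; lra. }
  assert (HdH : forall z, a <= z <= b -> is_derive HH z (dHH z)).
  { intros z Hz. assert (Hpz : is_derive psi z (dpsi z)) by (apply Hpsid; lra).
    unfold HH, dHH. auto_derive.
    - repeat split; eexists; eauto.
    - replace (Derive (fun x => psi x) z) with (dpsi z) by (symmetry; apply is_derive_unique; auto).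
      match goal with |- ?A = ?B => change (@eq R A B) end; unfold Rminus; ring. }
  assert (HdHc : forall z, a <= z <= b -> continuous dHH z).
  { intros z Hz. unfold dHH.
    apply (continuous_minus (fun z => eta*exp(eta*(z - x0)))).
    - apply (ex_derive_continuous (K:=R_AbsRing) (V:=R_NormedModule)); auto_derive; auto.
    - apply (continuous_mult (fun z => dpsi z + (l+eta)*psi z)).
      + apply (continuous_plus dpsi). apply Hdpsic; lra.
        apply (continuous_mult (fun _ => l + eta)). apply continuous_const. apply Hpsic.
      + apply (ex_derive_continuous (K:=R_AbsRing) (V:=R_NormedModule)); auto_derive; auto. }
  assert (HdHneg : forall z, a <= z <= b -> dHH z < 0).
  { intros z Hz. unfold dHH.
    assert (Hu : W < z - x0) by (unfold x0; lra).
    assert (Hsplit : exp ((l+eta)*(z - x0)) = exp (eta*(z-x0)) * exp (l*(z-x0)))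
      by (rewrite <- exp_plus; f_equal; ring).
    rewrite Hsplit.
    assert (Hlu : exp (l*W) < exp (l*(z-x0))) by (apply exp_increasing; nra).
    assert (Hps : 0 < psi z) by (apply Hpsi_pos; lra).
    assert (Hdp : m1 <= dpsi z) by (apply Hdpsi_lb; lra).
    assert (Hq : eta < m1 * exp (l*W)).
    { apply (Rmult_lt_reg_r (/ m1)). apply Rinv_0_lt_compat; auto.
      replace (m1 * exp (l*W) * / m1) with (exp (l*W)) by (field; lra). unfold Rdiv in HW3. lra. }
    assert (Hq2 : eta < (dpsi z + (l+eta)*psi z) * exp (l*(z-x0))).
    { assert (m1 * exp (l*W) <= (dpsi z + (l+eta)*psi z) * exp (l*(z-x0))).
      { apply Rmult_le_compat; try lra. apply Rlt_le, exp_pos. nra. }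
      lra. }
    pose proof (exp_pos (eta*(z-x0))). nra. }
  assert (HHa : S < HH a).
  { unfold HH.
    assert (exp (eta*W) < exp (eta*(a - x0))) by (apply exp_increasing; unfold x0; nra).
    assert (exp ((l+eta)*(a-x0)) <= E).
    { unfold E. destruct (Req_dec a b) as [->|]; [lra|]. apply Rlt_le, exp_increasing. nra. }
    assert (psi a * exp ((l+eta)*(a-x0)) <= psi a * E).
    { apply Rmult_le_compat_l; auto. apply Rlt_le, Hpsi_pos; lra. }
    lra. }
  assert (HHb : HH b < 0).
  { unfold HH.
    assert (Hsplit : exp ((l+eta)*(b - x0)) = exp (eta*(b-x0)) * / exp (- l*(b-x0))).
    { rewrite <- exp_Ropp, <- exp_plus; f_equal; ring. }
    rewrite Hsplit. fold pb.
    replace (b - x0) with (b + Rr*L + W) by (unfold x0; ring).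
    assert (He1 : 0 < exp (- l * (b + Rr*L + W))) by apply exp_pos.
    assert (He2 : 0 < exp (eta * (b + Rr*L + W))) by apply exp_pos.
    assert (1 < pb * / exp (- l * (b + Rr*L + W))).
    { apply (Rmult_lt_reg_r (exp (- l * (b + Rr*L + W)))); auto.
      rewrite Rmult_assoc, Rinv_l, Rmult_1_r; lra. }
    nra. }
  destruct (inv_fun HH dHH a b ltac:(lra) HdH HdHc HdHneg) as [g Hg].
  set (v := fun t => S * exp (-eta*((cA-c)*t))).
  assert (Hv : forall t, 0 <= t -> HH b < v t < HH a).
  { intros t Ht. unfold v. pose proof (exp_pos (-eta*((cA-c)*t))). split; [nra|].
    assert (exp (-eta*((cA-c)*t)) <= 1).
    { rewrite <- exp_0. destruct (Req_dec t 0) as [->|]; [right; f_equal; ring|].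
      apply Rlt_le, exp_increasing. assert (0 < eta * ((cA - c) * t)) by (apply Rmult_lt_0_compat; nra). lra. }
    nra. }
  set (X := fun t => cA*t + g (v t)).
  set (dv := fun t => S * (-eta*(cA-c)) * exp (-eta*((cA-c)*t))).
  set (X' := fun t => cA + / dHH (g (v t)) * dv t).
  assert (HXd : forall t, 0 <= t -> is_derive X t (X' t)).
  { intros t Ht. destruct (Hg (v t) (Hv t Ht)) as [Hg1 [Hg2 [Hg3 Hg4]]].
    unfold X, X'. unfold v at 1. auto_derive.
    - exists (/ dHH (g (v t))). exact Hg4.
    - replace (Derive (fun x : R => g x) (S * exp (- eta * ((cA - c) * t)))) with (/ dHH (g (v t)))
        by (symmetry; apply is_derive_unique; exact Hg4).
      unfold dv. match goal with |- ?A = ?B => change (@eq R A B) end. ring. }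
  assert (HXc : forall t, 0 <= t -> continuous X' t).
  { intros t Ht. destruct (Hg (v t) (Hv t Ht)) as [Hg1 [Hg2 [Hg3 Hg4]]].
    unfold X'. apply (continuous_plus (fun _ => cA)). apply continuous_const.
    apply (continuous_mult (fun t => / dHH (g (v t))) dv).
    - apply (continuous_comp (fun t => dHH (g (v t))) Rinv).
      + apply (continuous_comp (fun t => g (v t)) dHH).
        * apply (continuous_comp v g); auto.
          unfold v. apply (ex_derive_continuous (K:=R_AbsRing) (V:=R_NormedModule)); auto_derive; auto.
        * apply HdHc; lra.
      + apply (ex_derive_continuous (K:=R_AbsRing) (V:=R_NormedModule)); auto_derive.
        assert (dHH (g (v t)) < 0) by (apply HdHneg; lra). lra.
    - unfold dv. apply (ex_derive_continuous (K:=R_AbsRing) (V:=R_NormedModule)); auto_derive; auto. }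
  assert (HWS : ln S / eta < W).
  { assert (ln S < eta * W).
    { rewrite <- (ln_exp (eta*W)). apply ln_increasing; lra. }
    apply (Rmult_lt_reg_l eta); auto. replace (eta * (ln S / eta)) with (ln S) by (field; lra). lra. }
  exists x0, X.
  split.
  { intros t Ht. destruct (Hg (v t) (Hv t Ht)) as [Hg1 [Hg2 [Hg3 Hg4]]].
    set (z := g (v t)) in *.
    assert (HXt : X t = cA * t + z) by reflexivity.
    assert (HPQ : Pfun r1 c S eta x0 t (X t) = Qfun r1 c cA gamma L phi t (X t)).
    { unfold Pfun, Qfun. rewrite HXt. apply (PQ_eq l eta S x0 gamma cA c L phi t z (psi z)); auto. }
    set (w := X t - c * t - x0).
    assert (Hw : W < w) by (unfold w; rewrite HXt; unfold x0; nra).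
    set (dP := - l * exp (- l * w) + S * (l + eta) * exp (- (l + eta) * w)).
    assert (HdP : is_derive (fun x => Pfun r1 c S eta x0 t x) (X t) dP).
    { unfold Pfun, dP, w. fold l. auto_derive; auto.
      match goal with |- ?A = ?B => change (@eq R A B) end. unfold Rminus. ring. }
    assert (HdPn : dP < 0) by (apply (dP_neg l eta S W w); auto).
    set (dQ := exp (- l * (cA - c) * t) * dpsi z).
    assert (HdQ : is_derive (fun x => Qfun r1 c cA gamma L phi t x) (X t) dQ).
    { apply (is_derive_ext (fun x => exp (- l * (cA - c) * t) * psi (x - cA * t))).
      { intro x. unfold Qfun, psi. fold l. match goal with |- ?A = ?B => change (@eq R A B) end. ring. }
      assert (Hpz : is_derive psi (X t - cA * t) (dpsi z)).
      { rewrite HXt. replace (cA * t + z - cA * t) with z by ring. apply Hpsid; lra. }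
      unfold dQ. auto_derive.
      - exists (dpsi z). exact Hpz.
      - replace (Derive (fun x : R => psi x) (X t + - (cA * t))) with (dpsi z)
          by (symmetry; apply is_derive_unique; exact Hpz).
        match goal with |- ?A = ?B => change (@eq R A B) end. ring. }
    assert (HdQp : 0 < dQ).
    { unfold dQ. apply Rmult_lt_0_compat; [apply exp_pos|]. assert (m1 <= dpsi z) by (apply Hdpsi_lb; lra). lra. }
    split; [exact HPQ|].
    split.
    { destruct (isolated (fun x => Pfun r1 c S eta x0 t x - Qfun r1 c cA gamma L phi t x) (X t) (dP - dQ))
        as [del [Hdel Hiso]].
      - apply (is_derive_minus (fun x => Pfun r1 c S eta x0 t x) (fun x => Qfun r1 c cA gamma L phi t x)); auto.
      - lra.
      - rewrite HPQ; ring.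
      - exists del. split; auto. intros x Hx Heq. apply (Hiso x Hx). rewrite Heq; ring. }
    split; [exists dP; split; auto|].
    split; [exists dQ; split; auto|].
    rewrite HXt. lra. }
  assert (Hzb : forall t, 0 <= t -> a < X t - cA * t < b).
  { intros t Ht. destruct (Hg (v t) (Hv t Ht)) as [Hg1 _]. unfold X.
    replace (cA * t + g (v t) - cA * t) with (g (v t)) by ring. auto. }
  split.
  { set (Es := fun y => exists t, 0 <= t /\ y = X t - c * t - x0).
    assert (Hlb : Rbar_le (Finite (a - x0)) (Glb_Rbar Es)).
    { apply (proj2 (Glb_Rbar_correct Es)). intros y [t [Ht ->]].
      simpl. pose proof (Hzb t Ht). assert (0 <= (cA - c) * t) by nra. lra. }
    eapply Rbar_lt_le_trans; [|exact Hlb]. simpl. unfold x0. lra. }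
  split.
  { intros t Ht. pose proof (Hzb t Ht). assert (0 <= cA * t) by nra. lra. }
  split.
  { exists X'. split; [intros t Ht; apply HXd; lra|].
    split; [apply deriv_quot_right; apply HXd; lra|].
    split; [intros t Ht; apply HXc; lra|].
    apply (filterlim_filter_le_1 (F := locally 0)).
    - apply filter_le_within.
    - apply HXc; lra. }
  exists (Rr * L), 0. intros t Ht. pose proof (Hzb t Ht).
  apply Rabs_le. lra.
Qed.
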